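(* Let $S: x=x(u,v)$, $(u,v)\in\mathcal D$, be a strongly regular Weingarten surface parameterized by principal parameters. Then $(u,v)$ are geometric principal parameters if and only if $\sqrt{EG}\,(\nu_1-\nu_2)$ is constant.
   Context: For a surface $x=x(u,v)$ without umbilical points parameterized by principal parameters ($F=M=0$, with $E,F,G$, $L,M,N$ the coefficients of the first and second fundamental forms): $\nu_1=L/E$, $\nu_2=N/G$, $\gamma_1=-\frac{E_v}{2E\sqrt G}$, $\gamma_2=\frac{G_u}{2G\sqrt E}$. The surface is strongly regular if $(\nu_1-\nu_2)\gamma_1\gamma_2\neq0$, with the convention $\nu_1-\nu_2>0$. A strongly regular surface is Weingarten if there exist differentiable $f(\nu),g(\nu)$, $\nu\in\mathcal I\subseteq\mathbb R$, with $f-g>0$, $f'g'\neq0$, and a differentiable $\nu(u,v)\in\mathcal I$ with $\nu_u\nu_v\neq0$, such that $\nu_1=f(\nu)$, $\nu_2=g(\nu)$. With $\Phi$ an antiderivative of $f'/(f-g)$ and $\Psi$ an antiderivative of $g'/(g-f)$, put $\lambda=\ln\sqrt E+\Phi(\nu)$ and $\mu=\ln\sqrt G+\Psi(\nu)$. Principal parameters are geometric principal parameters if $\lambda$ and $\mu$ are constants. *)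

(* Defs.v *)
From Stdlib Require Import Reals.
From Coquelicot Require Import Coquelicot.
Open Scope R_scope.

Definition V3 := (R * R * R)%type.
Definition c1 (a : V3) : R := fst (fst a).
Definition c2 (a : V3) : R := snd (fst a).
Definition c3 (a : V3) : R := snd a.
Definition dot (a b : V3) : R := c1 a * c1 b + c2 a * c2 b + c3 a * c3 b.
Definition cross (a b : V3) : V3 :=
  (c2 a * c3 b - c3 a * c2 b, c3 a * c1 b - c1 a * c3 b, c1 a * c2 b - c2 a * c1 b).
Definition vnorm (a : V3) : R := sqrt (dot a a).
Definition vscal (k : R) (a : V3) : V3 := (k * c1 a, k * c2 a, k * c3 a).
Definition vzero : V3 := (0, 0, 0).

Definition pd_u (h : R -> R -> R) : R -> R -> R := fun u v => Derive (fun t => h t v) u.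
Definition pd_v (h : R -> R -> R) : R -> R -> R := fun u v => Derive (fun t => h u t) v.

Definition vd_u (x : R -> R -> V3) : R -> R -> V3 := fun u v =>
  (pd_u (fun a b => c1 (x a b)) u v, pd_u (fun a b => c2 (x a b)) u v,
   pd_u (fun a b => c3 (x a b)) u v).
Definition vd_v (x : R -> R -> V3) : R -> R -> V3 := fun u v =>
  (pd_v (fun a b => c1 (x a b)) u v, pd_v (fun a b => c2 (x a b)) u v,
   pd_v (fun a b => c3 (x a b)) u v).

Fixpoint Ck (k : nat) (D : R * R -> Prop) (h : R -> R -> R) : Prop :=
  (forall p, D p -> continuous (fun q : R * R => h (fst q) (snd q)) p) /\
  match k with
  | O => True
  | S k' =>
      (forall p, D p -> ex_derive (fun t => h t (snd p)) (fst p) /\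
                        ex_derive (fun t => h (fst p) t) (snd p)) /\
      Ck k' D (pd_u h) /\ Ck k' D (pd_v h)
  end.

Definition smooth_on (D : R * R -> Prop) (h : R -> R -> R) : Prop :=
  forall k, Ck k D h.

Definition connected_set (D : R * R -> Prop) : Prop :=
  forall A B : R * R -> Prop, open A -> open B ->
    (forall p, D p -> A p \/ B p) ->
    (forall p, D p -> A p -> B p -> False) ->
    (exists p, D p /\ A p) -> (exists p, D p /\ B p) -> False.

Definition domain (D : R * R -> Prop) : Prop := open D /\ connected_set D.

Definition regular_surface (x : R -> R -> V3) (D : R * R -> Prop) : Prop :=
  domain D /\
  smooth_on D (fun u v => c1 (x u v)) /\
  smooth_on D (fun u v => c2 (x u v)) /\
  smooth_on D (fun u v => c3 (x u v)) /\
  (forall u v, D (u, v) -> cross (vd_u x u v) (vd_v x u v) <> vzero).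

Definition unit_normal (x : R -> R -> V3) (u v : R) : V3 :=
  vscal (/ vnorm (cross (vd_u x u v) (vd_v x u v))) (cross (vd_u x u v) (vd_v x u v)).

Definition E_ (x : R -> R -> V3) u v := dot (vd_u x u v) (vd_u x u v).
Definition F_ (x : R -> R -> V3) u v := dot (vd_u x u v) (vd_v x u v).
Definition G_ (x : R -> R -> V3) u v := dot (vd_v x u v) (vd_v x u v).
Definition L_ (x : R -> R -> V3) u v := dot (vd_u (vd_u x) u v) (unit_normal x u v).
Definition M_ (x : R -> R -> V3) u v := dot (vd_v (vd_u x) u v) (unit_normal x u v).
Definition N_ (x : R -> R -> V3) u v := dot (vd_v (vd_v x) u v) (unit_normal x u v).

(** Principal curvatures (in principal parameters) and the gammas *)
Definition nu1 x u v := L_ x u v / E_ x u v.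
Definition nu2 x u v := N_ x u v / G_ x u v.
Definition gamma1 x u v := - pd_v (E_ x) u v / (2 * E_ x u v * sqrt (G_ x u v)).
Definition gamma2 x u v := pd_u (G_ x) u v / (2 * G_ x u v * sqrt (E_ x u v)).

Definition principal_parameters (x : R -> R -> V3) (D : R * R -> Prop) : Prop :=
  forall u v, D (u, v) -> F_ x u v = 0 /\ M_ x u v = 0.

Definition no_umbilics (x : R -> R -> V3) (D : R * R -> Prop) : Prop :=
  forall u v, D (u, v) -> nu1 x u v <> nu2 x u v.

(** Strongly regular, with the convention nu1 - nu2 > 0 *)
Definition strongly_regular (x : R -> R -> V3) (D : R * R -> Prop) : Prop :=
  forall u v, D (u, v) ->
    (nu1 x u v - nu2 x u v) * gamma1 x u v * gamma2 x u v <> 0 /\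
    nu1 x u v - nu2 x u v > 0.

Definition weingarten_data (x : R -> R -> V3) (D : R * R -> Prop)
    (I : R -> Prop) (f g : R -> R) (nu : R -> R -> R) : Prop :=
  (forall t, I t ->
     ex_derive f t /\ ex_derive g t /\ f t - g t > 0 /\ Derive f t * Derive g t <> 0) /\
  (forall u v, D (u, v) ->
     I (nu u v) /\ differentiable_pt nu u v /\
     pd_u nu u v * pd_v nu u v <> 0 /\
     nu1 x u v = f (nu u v) /\ nu2 x u v = g (nu u v)).

Definition weingarten_surface (x : R -> R -> V3) (D : R * R -> Prop) : Prop :=
  exists I f g nu, weingarten_data x D I f g nu.

Definition antiderivative_on (I : R -> Prop) (Phi h : R -> R) : Prop :=
  forall t, I t -> is_derive Phi t (h t).

Definition lambda_ (x : R -> R -> V3) (nu : R -> R -> R) (Phi : R -> R) u v :=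
  ln (sqrt (E_ x u v)) + Phi (nu u v).
Definition mu_ (x : R -> R -> V3) (nu : R -> R -> R) (Psi : R -> R) u v :=
  ln (sqrt (G_ x u v)) + Psi (nu u v).

Definition constant_on (D : R * R -> Prop) (h : R -> R -> R) : Prop :=
  exists c, forall u v, D (u, v) -> h u v = c.

Definition geometric_principal_parameters (x : R -> R -> V3) (D : R * R -> Prop)
    (nu : R -> R -> R) (Phi Psi : R -> R) : Prop :=
  constant_on D (lambda_ x nu Phi) /\ constant_on D (mu_ x nu Psi).

(* Main.v *)
Require Import Defs.
From Stdlib Require Import Reals Lra.
From Coquelicot Require Import Coquelicot.
Open Scope R_scope.
Notation c1 := Defs.c1. Notation c2 := Defs.c2. Notation c3 := Defs.c3.

Lemma ball_sq (p q : R * R) (e : R) :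
  ball p e q <-> Rabs (fst q - fst p) < e /\ Rabs (snd q - snd p) < e.
Proof.
  destruct p, q. simpl. unfold ball; simpl. unfold prod_ball, AbsRing_ball; simpl.
  unfold abs, minus, plus, opp; simpl. tauto.
Qed.

Lemma sq_open (A : R * R -> Prop) :
  (forall p, A p -> exists e, 0 < e /\ forall q, Rabs (fst q - fst p) < e -> Rabs (snd q - snd p) < e -> A q) ->
  open A.
Proof.
  intros H p Hp. destruct (H p Hp) as [e [He He']].
  exists (mkposreal e He). intros q Hq. apply ball_sq in Hq. destruct Hq. apply He'; assumption.
Qed.

Lemma open_loc2d (D : R * R -> Prop) u v : open D -> D (u, v) ->
  locally_2d (fun a b => D (a, b)) u v.
Proof.
  intros HD H. apply locally_2d_locally. specialize (HD _ H).
  destruct HD as [e He]. exists e. intros [a b] Hab. apply He. exact Hab.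
Qed.

Lemma loc_v (D : R * R -> Prop) u v : open D -> D (u, v) -> locally v (fun t => D (u, t)).
Proof. intros. apply (locally_2d_1d_const_x (fun a b => D (a,b))). now apply open_loc2d. Qed.
Lemma loc_u (D : R * R -> Prop) u v : open D -> D (u, v) -> locally u (fun t => D (t, v)).
Proof. intros. apply (locally_2d_1d_const_y (fun a b => D (a,b))). now apply open_loc2d. Qed.

Lemma seg_const (F : R -> R) a b : a <= b -> (forall t, a <= t <= b -> is_derive F t 0) -> F a = F b.
Proof.
  intros Hab H. destruct (Rle_lt_or_eq_dec _ _ Hab) as [Hlt|Heq].
  - apply (eq_is_derive F a b); auto.
  - now subst.
Qed.

Lemma seg_const2 (F : R -> R) a b e : Rabs (b - a) < e ->
  (forall t, Rabs (t - a) < e -> is_derive F t 0) -> F a = F b.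
Proof.
  intros Hb H. destruct (Rle_dec a b) as [Hab|Hab].
  - apply seg_const; auto. intros t Ht. apply H.
    apply Rabs_def1; apply Rabs_def2 in Hb; lra.
  - symmetry; apply seg_const; [lra|]. intros t Ht. apply H.
    apply Rabs_def1; apply Rabs_def2 in Hb; lra.
Qed.

Lemma const_of_zero (D : R * R -> Prop) (h : R -> R -> R) : Defs.domain D ->
  (forall u v, D (u, v) -> is_derive (fun t => h t v) u 0 /\ is_derive (fun t => h u t) v 0) ->
  constant_on D h.
Proof.
  intros [HD Hc] H.
  assert (Hloc : forall p, D p -> exists e, 0 < e /\ forall q, Rabs (fst q - fst p) < e ->
     Rabs (snd q - snd p) < e -> D q /\ h (fst q) (snd q) = h (fst p) (snd p)).
  { intros [p1 p2] Hp. destruct (open_loc2d D p1 p2 HD Hp) as [[e He] Hd].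
    simpl in Hd. exists e. split; auto. intros [q1 q2] Hq1 Hq2; simpl in *.
    split; [apply Hd; auto|].
    transitivity (h q1 p2).
    - symmetry. apply (seg_const2 (fun t => h q1 t) p2 q2 e); [exact Hq2|].
      intros t Ht. apply (H q1 t). apply Hd; assumption.
    - symmetry. apply (seg_const2 (fun t => h t p2) p1 q1 e); [exact Hq1|].
      intros t Ht. apply (H t p2). apply Hd; [assumption|]. rewrite Rminus_eq_0, Rabs_R0; exact He. }
  destruct (Classical_Prop.classic (exists p, D p)) as [[[u0 v0] H0]|Hn].
  2:{ exists 0. intros u v Huv. exfalso. apply Hn. exists (u,v). exact Huv. }
  exists (h u0 v0). intros u v Huv.
  destruct (Req_dec (h u v) (h u0 v0)) as [E|E]; [exact E|]. exfalso.
  set (c := h u0 v0).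
  apply (Hc (fun p => exists e, 0 < e /\ forall q, Rabs (fst q - fst p) < e ->
           Rabs (snd q - snd p) < e -> D q /\ h (fst q) (snd q) = c)
            (fun p => exists e, 0 < e /\ forall q, Rabs (fst q - fst p) < e ->
           Rabs (snd q - snd p) < e -> D q /\ h (fst q) (snd q) <> c)).
  - apply sq_open. intros p [e [He Hq]]. exists (e/2). split; [lra|].
    intros q Hq1 Hq2. exists (e/2). split; [lra|]. intros r Hr1 Hr2. apply Hq.
    + replace (fst r - fst p) with ((fst r - fst q) + (fst q - fst p)) by ring.
      eapply Rle_lt_trans; [apply Rabs_triang|lra].
    + replace (snd r - snd p) with ((snd r - snd q) + (snd q - snd p)) by ring.
      eapply Rle_lt_trans; [apply Rabs_triang|lra].
  - apply sq_open. intros p [e [He Hq]]. exists (e/2). split; [lra|].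
    intros q Hq1 Hq2. exists (e/2). split; [lra|]. intros r Hr1 Hr2. apply Hq.
    + replace (fst r - fst p) with ((fst r - fst q) + (fst q - fst p)) by ring.
      eapply Rle_lt_trans; [apply Rabs_triang|lra].
    + replace (snd r - snd p) with ((snd r - snd q) + (snd q - snd p)) by ring.
      eapply Rle_lt_trans; [apply Rabs_triang|lra].
  - intros p Hp. destruct (Hloc p Hp) as [e [He Hq]].
    destruct (Req_dec (h (fst p) (snd p)) c) as [Ec|Ec].
    + left. exists e. split; auto. intros q Hq1 Hq2. destruct (Hq q Hq1 Hq2). split; congruence.
    + right. exists e. split; auto. intros q Hq1 Hq2. destruct (Hq q Hq1 Hq2). split; congruence.
  - intros p Hp [e1 [He1 H1]] [e2 [He2 H2]].
    assert (Z : Rabs (fst p - fst p) < Rmin e1 e2 /\ Rabs (snd p - snd p) < Rmin e1 e2).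
    { rewrite !Rminus_eq_0, Rabs_R0. split; apply Rmin_pos; auto. }
    destruct (H1 p) as [_ A1]; try (eapply Rlt_le_trans; [apply Z|apply Rmin_l]).
    destruct (H2 p) as [_ A2]; try (eapply Rlt_le_trans; [apply Z|apply Rmin_r]). auto.
  - exists (u0, v0). split; [exact H0|]. destruct (Hloc _ H0) as [e [He Hq]]. exists e. split; [exact He|]. exact Hq.
  - exists (u, v). split; [exact Huv|]. destruct (Hloc _ Huv) as [e [He Hq]]. exists e. split; [exact He|].
    intros q Hq1 Hq2. destruct (Hq q Hq1 Hq2) as [Dq Eq]. split; [exact Dq|]. simpl in Eq. rewrite Eq. intro Hc0. apply E. exact Hc0.
Qed.

Lemma diffpt_u (f : R -> R -> R) x y : differentiable_pt f x y -> ex_derive (fun t => f t y) x.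
Proof.
  intros [lx [ly H]]. exists lx. apply is_derive_Reals. intros eps Heps.
  destruct (H (mkposreal (eps/2) ltac:(lra))) as [[d Hd] Hdd]. simpl in Hdd.
  exists (mkposreal d Hd). intros h Hh0 Hh. simpl in Hh.
  specialize (Hdd (x + h) y). replace (x + h - x) with h in Hdd by ring.
  rewrite Rminus_eq_0, Rabs_R0 in Hdd. specialize (Hdd Hh Hd).
  rewrite Rmax_left in Hdd by apply Rabs_pos.
  replace ((f (x + h) y - f x y) / h - lx) with ((f (x + h) y - f x y - (lx * h + ly * 0)) / h)
    by (field; auto).
  unfold Rdiv. rewrite Rabs_mult, Rabs_inv.
  apply (Rmult_le_compat_r (/ Rabs h)) in Hdd.
  2:{ left. apply Rinv_0_lt_compat. now apply Rabs_pos_lt. }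
  eapply Rle_lt_trans; [exact Hdd|]. rewrite Rmult_assoc, Rinv_r by (now apply Rabs_no_R0). lra.
Qed.
Lemma diffpt_v (f : R -> R -> R) x y : differentiable_pt f x y -> ex_derive (fun t => f x t) y.
Proof.
  intros [lx [ly H]]. exists ly. apply is_derive_Reals. intros eps Heps.
  destruct (H (mkposreal (eps/2) ltac:(lra))) as [[d Hd] Hdd]. simpl in Hdd.
  exists (mkposreal d Hd). intros h Hh0 Hh. simpl in Hh.
  specialize (Hdd x (y + h)). replace (y + h - y) with h in Hdd by ring.
  rewrite Rminus_eq_0, Rabs_R0 in Hdd. specialize (Hdd Hd Hh).
  rewrite Rmax_right in Hdd by apply Rabs_pos.
  replace ((f x (y + h) - f x y) / h - ly) with ((f x (y + h) - f x y - (lx * 0 + ly * h)) / h)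
    by (field; auto).
  unfold Rdiv. rewrite Rabs_mult, Rabs_inv.
  apply (Rmult_le_compat_r (/ Rabs h)) in Hdd.
  2:{ left. apply Rinv_0_lt_compat. now apply Rabs_pos_lt. }
  eapply Rle_lt_trans; [exact Hdd|]. rewrite Rmult_assoc, Rinv_r by (now apply Rabs_no_R0). lra.
Qed.


Lemma sm_pdu D h : smooth_on D h -> smooth_on D (pd_u h).
Proof. intros H k. destruct (H (S k)) as [_ [_ [H1 _]]]. exact H1. Qed.
Lemma sm_pdv D h : smooth_on D h -> smooth_on D (pd_v h).
Proof. intros H k. destruct (H (S k)) as [_ [_ [_ H1]]]. exact H1. Qed.
Lemma sm_exu D h u v : smooth_on D h -> D (u, v) -> ex_derive (fun t => h t v) u.
Proof. intros H Hd. destruct (H 1%nat) as [_ [H1 _]]. exact (proj1 (H1 (u, v) Hd)). Qed.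
Lemma sm_exv D h u v : smooth_on D h -> D (u, v) -> ex_derive (fun t => h u t) v.
Proof. intros H Hd. destruct (H 1%nat) as [_ [H1 _]]. exact (proj2 (H1 (u, v) Hd)). Qed.
Lemma sm_isu D h u v : smooth_on D h -> D (u, v) -> is_derive (fun t => h t v) u (pd_u h u v).
Proof. intros. apply Derive_correct. eapply sm_exu; eauto. Qed.
Lemma sm_isv D h u v : smooth_on D h -> D (u, v) -> is_derive (fun t => h u t) v (pd_v h u v).
Proof. intros. apply Derive_correct. eapply sm_exv; eauto. Qed.
Lemma sm_cont D h u v : smooth_on D h -> D (u, v) -> continuity_2d_pt h u v.
Proof. intros H Hd. apply continuity_2d_pt_filterlim. destruct (H 0%nat) as [H1 _]. exact (H1 (u,v) Hd). Qed.

Lemma sm_schwarz D h u v : open D -> smooth_on D h -> D (u, v) ->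
  pd_u (pd_v h) u v = pd_v (pd_u h) u v.
Proof.
  intros HD H Hd. unfold pd_u, pd_v. apply Schwarz.
  - destruct (open_loc2d D u v HD Hd) as [e He]. exists e. intros a b Ha Hb.
    specialize (He a b Ha Hb).
    split; [apply (sm_exu D h a b H He)|].
    split; [apply (sm_exv D h a b H He)|].
    split; [apply (sm_exu D (pd_v h) a b (sm_pdv _ _ H) He)|].
    apply (sm_exv D (pd_u h) a b (sm_pdu _ _ H) He).
  - apply (sm_cont D (pd_u (pd_v h)) u v); auto. apply sm_pdu, sm_pdv; auto.
  - apply (sm_cont D (pd_v (pd_u h)) u v); auto. apply sm_pdv, sm_pdu; auto.
Qed.

Lemma zero_der_v (D : R*R -> Prop) (h : R -> R -> R) u v l : open D -> D (u, v) ->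
  (forall a b, D (a, b) -> h a b = 0) -> is_derive (fun t => h u t) v l -> l = 0.
Proof.
  intros HD Hd Hz H. assert (H0 : is_derive (fun t => h u t) v 0).
  { apply (is_derive_ext_loc (fun _ => 0)). 
    - generalize (loc_v D u v HD Hd). apply filter_imp. intros t Ht. symmetry. now apply Hz.
    - apply is_derive_Reals, derivable_pt_lim_const. }
  rewrite <- (is_derive_unique _ _ _ H). now apply is_derive_unique.
Qed.
Lemma zero_der_u (D : R*R -> Prop) (h : R -> R -> R) u v l : open D -> D (u, v) ->
  (forall a b, D (a, b) -> h a b = 0) -> is_derive (fun t => h t v) u l -> l = 0.
Proof.
  intros HD Hd Hz H. assert (H0 : is_derive (fun t => h t v) u 0).
  { apply (is_derive_ext_loc (fun _ => 0)). 
    - generalize (loc_u D u v HD Hd). apply filter_imp. intros t Ht. symmetry. now apply Hz.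
    - apply is_derive_Reals, derivable_pt_lim_const. }
  rewrite <- (is_derive_unique _ _ _ H). now apply is_derive_unique.
Qed.


Lemma isd_mult (f g : R -> R) t df dg : is_derive f t df -> is_derive g t dg ->
  is_derive (fun s => f s * g s) t (df * g t + f t * dg).
Proof. intros. apply (is_derive_mult f g); auto. intros; apply Rmult_comm. Qed.
Lemma isd_plus (f g : R -> R) t df dg : is_derive f t df -> is_derive g t dg ->
  is_derive (fun s => f s + g s) t (df + dg).
Proof. intros. apply (is_derive_plus f g); auto. Qed.
Lemma isd_minus (f g : R -> R) t df dg : is_derive f t df -> is_derive g t dg ->
  is_derive (fun s => f s - g s) t (df - dg).
Proof. intros. apply (is_derive_minus f g); auto. Qed.
Lemma isd_inv (f : R -> R) t df : is_derive f t df -> f t <> 0 ->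
  is_derive (fun s => / f s) t (- df / f t ^ 2).
Proof. intros. apply (is_derive_inv f); auto. Qed.
Lemma isd_ext (f g : R -> R) (t l l' : R) : (forall s, f s = g s) -> l = l' -> is_derive f t l -> is_derive g t l'.
Proof. intros H -> H'. eapply is_derive_ext; eauto. Qed.

Definition is_der3 (F : R -> V3) t (F' : V3) :=
  is_derive (fun s => c1 (F s)) t (c1 F') /\ is_derive (fun s => c2 (F s)) t (c2 F') /\
  is_derive (fun s => c3 (F s)) t (c3 F').

Lemma der3_dot A B t A' B' : is_der3 A t A' -> is_der3 B t B' ->
  is_derive (fun s => dot (A s) (B s)) t (dot A' (B t) + dot (A t) B').
Proof.
  intros [a1 [a2 a3]] [b1 [b2 b3]]. unfold dot.
  pose proof (isd_plus _ _ _ _ _ (isd_plus _ _ _ _ _ (isd_mult _ _ _ _ _ a1 b1) (isd_mult _ _ _ _ _ a2 b2)) (isd_mult _ _ _ _ _ a3 b3)) as HH.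
  eapply isd_ext; [| |exact HH]. all: try (intro s; reflexivity). cbv beta. lra.
Qed.

Lemma dot_comm a b : dot a b = dot b a.
Proof. unfold dot; ring. Qed.

Lemma dot_pos a : a <> vzero -> 0 < dot a a.
Proof.
  destruct a as [[a1 a2] a3]. unfold dot, vzero, c1, c2, c3; simpl. intros H.
  destruct (Rlt_dec 0 (a1*a1+a2*a2+a3*a3)) as [h|h]; auto. exfalso. apply H.
  assert (a1 = 0) by nra. assert (a2 = 0) by nra. assert (a3 = 0) by nra. subst. reflexivity.
Qed.

Lemma reciprocal_id a b w z :
  dot (cross a b) (cross a b) * dot z w =
  (dot b b * dot w a - dot a b * dot w b) * dot z a +
  (dot a a * dot w b - dot a b * dot w a) * dot z b +
  dot w (cross a b) * dot z (cross a b).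
Proof.
  destruct a as [[a1 a2] a3], b as [[b1 b2] b3], w as [[w1 w2] w3], z as [[z1 z2] z3].
  unfold dot, cross, c1, c2, c3; simpl. ring.
Qed.

Lemma cross_sq a b : dot (cross a b) (cross a b) = dot a a * dot b b - dot a b * dot a b.
Proof.
  destruct a as [[a1 a2] a3], b as [[b1 b2] b3]. unfold dot, cross, c1, c2, c3; simpl. ring.
Qed.

Lemma decomp_b a b w z : dot a b = 0 -> cross a b <> vzero -> dot w a = 0 -> dot w (cross a b) = 0 ->
  dot b b * dot z w = dot w b * dot z b.
Proof.
  intros Hab HC Hwa HwC. pose proof (reciprocal_id a b w z) as R1.
  rewrite cross_sq, Hab, Hwa, HwC in R1. 
  assert (Ha : 0 < dot a a).
  { apply dot_pos. intro Z. apply HC. rewrite Z. unfold cross, vzero, c1, c2, c3; simpl. f_equal; [f_equal|]; ring. }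
  apply (Rmult_eq_reg_l (dot a a)); [|lra]. transitivity ((dot a a * dot b b - 0*0) * dot z w); [ring|]. rewrite R1. ring.
Qed.

Lemma decomp_a a b w z : dot a b = 0 -> cross a b <> vzero -> dot w b = 0 -> dot w (cross a b) = 0 ->
  dot a a * dot z w = dot w a * dot z a.
Proof.
  intros Hab HC Hwb HwC. pose proof (reciprocal_id a b w z) as R1.
  rewrite cross_sq, Hab, Hwb, HwC in R1.
  assert (Hb : 0 < dot b b).
  { apply dot_pos. intro Z. apply HC. rewrite Z. unfold cross, vzero, c1, c2, c3; simpl. f_equal; [f_equal|]; ring. }
  apply (Rmult_eq_reg_l (dot b b)); [|lra]. transitivity ((dot a a * dot b b - 0*0) * dot z w); [ring|]. rewrite R1. ring.
Qed.

Lemma dot_scal k a b : dot (vscal k a) b = k * dot a b.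
Proof. unfold dot, vscal, c1, c2, c3; simpl. ring. Qed.

Lemma cross_dot_l a b : dot (cross a b) a = 0.
Proof. destruct a as [[a1 a2] a3], b as [[b1 b2] b3]. unfold dot, cross, c1, c2, c3; simpl. ring. Qed.
Lemma cross_dot_r a b : dot (cross a b) b = 0.
Proof. destruct a as [[a1 a2] a3], b as [[b1 b2] b3]. unfold dot, cross, c1, c2, c3; simpl. ring. Qed.

Lemma vnorm_pos C : C <> vzero -> 0 < vnorm C.
Proof. intros H. unfold vnorm. apply sqrt_lt_R0. now apply dot_pos. Qed.

Lemma unit_nn C : C <> vzero -> dot (vscal (/ vnorm C) C) (vscal (/ vnorm C) C) = 1.
Proof.
  intros H. pose proof (vnorm_pos C H). rewrite dot_scal, dot_comm, dot_scal.
  assert (E : dot C C = vnorm C * vnorm C) by (unfold vnorm; rewrite sqrt_sqrt; [auto| left; now apply dot_pos]).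
  rewrite E. field. lra.
Qed.

Lemma exd_plus (f g : R -> R) (t : R) : ex_derive f t -> ex_derive g t -> ex_derive (fun s => f s + g s) t.
Proof. intros [a Ha] [b Hb]. eexists. apply isd_plus; eauto. Qed.
Lemma exd_minus (f g : R -> R) (t : R) : ex_derive f t -> ex_derive g t -> ex_derive (fun s => f s - g s) t.
Proof. intros [a Ha] [b Hb]. eexists. apply isd_minus; eauto. Qed.
Lemma exd_mult (f g : R -> R) (t : R) : ex_derive f t -> ex_derive g t -> ex_derive (fun s => f s * g s) t.
Proof. intros [a Ha] [b Hb]. eexists. apply isd_mult; eauto. Qed.

Definition ex3 (F : R -> V3) (t : R) :=
  ex_derive (fun s => c1 (F s)) t /\ ex_derive (fun s => c2 (F s)) t /\ ex_derive (fun s => c3 (F s)) t.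

Lemma ex3_der3 F t : ex3 F t -> is_der3 F t (Derive (fun s => c1 (F s)) t, Derive (fun s => c2 (F s)) t, Derive (fun s => c3 (F s)) t).
Proof. intros [h1 [h2 h3]]. split; [|split]; apply Derive_correct; auto. Qed.

Lemma der3_ex3 F t F' : is_der3 F t F' -> ex3 F t.
Proof. intros [h1 [h2 h3]]. split; [|split]; eexists; eauto. Qed.

Lemma ex_dot A B t : ex3 A t -> ex3 B t -> ex_derive (fun s => dot (A s) (B s)) t.
Proof.
  intros [a1 [a2 a3]] [b1 [b2 b3]]. unfold dot.
  apply exd_plus; [apply exd_plus|]; apply exd_mult; auto.
Qed.

Lemma ex_cross A B t : ex3 A t -> ex3 B t -> ex3 (fun s => cross (A s) (B s)) t.
Proof.
  intros [a1 [a2 a3]] [b1 [b2 b3]]. unfold cross, c1, c2, c3 in *; simpl.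
  split; [|split]; apply exd_minus; apply exd_mult; auto.
Qed.

Lemma ex_vnorm A t : ex3 A t -> A t <> vzero -> ex_derive (fun s => vnorm (A s)) t.
Proof.
  intros H Hn. destruct (ex_dot A A t H H) as [l Hl]. eexists. unfold vnorm.
  apply (is_derive_sqrt (fun s => dot (A s) (A s))); [exact Hl|]. now apply dot_pos.
Qed.

Lemma ex_normal P Q t : ex3 P t -> ex3 Q t -> cross (P t) (Q t) <> vzero ->
  ex3 (fun s => vscal (/ vnorm (cross (P s) (Q s))) (cross (P s) (Q s))) t.
Proof.
  intros HP HQ HC. pose proof (ex_cross P Q t HP HQ) as HX.
  assert (Hk : ex_derive (fun s => / vnorm (cross (P s) (Q s))) t).
  { apply (ex_derive_inv (fun s => vnorm (cross (P s) (Q s)))).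
    - now apply (ex_vnorm (fun s => cross (P s) (Q s))).
    - pose proof (vnorm_pos _ HC). lra. }
  destruct HX as [x1 [x2 x3]].
  split; [|split]; apply (exd_mult (fun s => / vnorm (cross (P s) (Q s)))); auto.
Qed.


Definition smooth3 D (X : R -> R -> V3) :=
  smooth_on D (fun a b => c1 (X a b)) /\ smooth_on D (fun a b => c2 (X a b)) /\
  smooth_on D (fun a b => c3 (X a b)).

Lemma smooth3_u D X : smooth3 D X -> smooth3 D (vd_u X).
Proof. intros [h1 [h2 h3]]. split; [|split]; apply sm_pdu; assumption. Qed.
Lemma smooth3_v D X : smooth3 D X -> smooth3 D (vd_v X).
Proof. intros [h1 [h2 h3]]. split; [|split]; apply sm_pdv; assumption. Qed.

Lemma der3_v D X u v : smooth3 D X -> D (u, v) -> is_der3 (fun s => X u s) v (vd_v X u v).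
Proof.
  intros [h1 [h2 h3]] Hd. split; [|split].
  - exact (sm_isv D _ u v h1 Hd).
  - exact (sm_isv D _ u v h2 Hd).
  - exact (sm_isv D _ u v h3 Hd).
Qed.
Lemma der3_u D X u v : smooth3 D X -> D (u, v) -> is_der3 (fun s => X s v) u (vd_u X u v).
Proof.
  intros [h1 [h2 h3]] Hd. split; [|split].
  - exact (sm_isu D _ u v h1 Hd).
  - exact (sm_isu D _ u v h2 Hd).
  - exact (sm_isu D _ u v h3 Hd).
Qed.
Lemma schwarz3 D X u v : open D -> smooth3 D X -> D (u, v) -> vd_u (vd_v X) u v = vd_v (vd_u X) u v.
Proof.
  intros HD [h1 [h2 h3]] Hd.
  change (vd_u (vd_v X) u v) with (pd_u (pd_v (fun a b => c1 (X a b))) u v,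
     pd_u (pd_v (fun a b => c2 (X a b))) u v, pd_u (pd_v (fun a b => c3 (X a b))) u v).
  change (vd_v (vd_u X) u v) with (pd_v (pd_u (fun a b => c1 (X a b))) u v,
     pd_v (pd_u (fun a b => c2 (X a b))) u v, pd_v (pd_u (fun a b => c3 (X a b))) u v).
  rewrite (sm_schwarz D _ u v HD h1 Hd), (sm_schwarz D _ u v HD h2 Hd), (sm_schwarz D _ u v HD h3 Hd).
  reflexivity.
Qed.

Lemma const_der_u (D : R*R -> Prop) (h : R -> R -> R) c u v l : open D -> D (u, v) ->
  (forall a b, D (a, b) -> h a b = c) -> is_derive (fun t => h t v) u l -> l = 0.
Proof.
  intros HD Hd Hz H. apply (zero_der_u D (fun a b => h a b - c) u v l HD Hd).
  - intros a b Hab. rewrite Hz; auto. ring.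
  - eapply isd_ext; [| |apply (isd_minus _ (fun _ => c) u l 0 H)]. intro; reflexivity.
    lra. apply is_derive_Reals, derivable_pt_lim_const.
Qed.
Lemma const_der_v (D : R*R -> Prop) (h : R -> R -> R) c u v l : open D -> D (u, v) ->
  (forall a b, D (a, b) -> h a b = c) -> is_derive (fun t => h u t) v l -> l = 0.
Proof.
  intros HD Hd Hz H. apply (zero_der_v D (fun a b => h a b - c) u v l HD Hd).
  - intros a b Hab. rewrite Hz; auto. ring.
  - eapply isd_ext; [| |apply (isd_minus _ (fun _ => c) v l 0 H)]. intro; reflexivity.
    lra. apply is_derive_Reals, derivable_pt_lim_const.
Qed.

Lemma cross_nz_l a b : cross a b <> vzero -> a <> vzero.
Proof. intros H Z. apply H. rewrite Z. unfold cross, vzero, c1, c2, c3; simpl. f_equal; [f_equal|]; ring. Qed.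
Lemma cross_nz_r a b : cross a b <> vzero -> b <> vzero.
Proof. intros H Z. apply H. rewrite Z. unfold cross, vzero, c1, c2, c3; simpl. f_equal; [f_equal|]; ring. Qed.

Lemma perp_C C w : C <> vzero -> dot w (vscal (/ vnorm C) C) = 0 -> dot w C = 0.
Proof.
  intros HC H. rewrite dot_comm, dot_scal in H. pose proof (vnorm_pos C HC).
  apply Rmult_integral in H. destruct H as [H|H].
  - exfalso. apply Rinv_neq_0_compat in H; auto. lra.
  - now rewrite dot_comm.
Qed.


Lemma codazzi x D u v :
  open D -> smooth3 D x ->
  (forall a b, D (a,b) -> cross (vd_u x a b) (vd_v x a b) <> vzero) ->
  (forall a b, D (a,b) -> F_ x a b = 0) ->
  (forall a b, D (a,b) -> M_ x a b = 0) ->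
  D (u,v) ->
  is_derive (fun t => E_ x u t) v (2 * dot (vd_u x u v) (vd_v (vd_u x) u v)) /\
  is_derive (fun t => nu1 x u t) v
    (2 * dot (vd_u x u v) (vd_v (vd_u x) u v) / (2 * E_ x u v) * (nu2 x u v - nu1 x u v)).
Proof.
  intros HD Hs HC HF HM Hd.
  pose proof (smooth3_u _ _ Hs) as Hsu.
  pose proof (smooth3_v _ _ Hs) as Hsv.
  pose proof (smooth3_v _ _ Hsu) as Hsuv.
  pose proof (smooth3_u _ _ Hsu) as Hsuu.
  pose proof (der3_u D (vd_u x) u v Hsu Hd) as Dau.
  pose proof (der3_v D (vd_u x) u v Hsu Hd) as Dav.
  pose proof (der3_u D (vd_v x) u v Hsv Hd) as Dbu.
  pose proof (der3_v D (vd_v x) u v Hsv Hd) as Dbv.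
  pose proof (der3_v D (vd_u (vd_u x)) u v Hsuu Hd) as Dauuv.
  pose proof (der3_u D (vd_v (vd_u x)) u v Hsuv Hd) as Dauvu.
  assert (exists n', is_der3 (fun s => unit_normal x s v) u n') as [nu' Dnu].
  { eexists. apply ex3_der3.
    exact (ex_normal (fun s => vd_u x s v) (fun s => vd_v x s v) u (der3_ex3 _ _ _ Dau) (der3_ex3 _ _ _ Dbu) (HC u v Hd)). }
  assert (exists n', is_der3 (fun s => unit_normal x u s) v n') as [nv' Dnv].
  { eexists. apply ex3_der3.
    exact (ex_normal (fun s => vd_u x u s) (fun s => vd_v x u s) v (der3_ex3 _ _ _ Dav) (der3_ex3 _ _ _ Dbv) (HC u v Hd)). }
  assert (Fu := const_der_u D (fun a b => dot (vd_u x a b) (vd_v x a b)) 0 u v _ HD Hd HF (der3_dot _ _ _ _ _ Dau Dbu)).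
  assert (Mu := const_der_u D (fun a b => dot (vd_v (vd_u x) a b) (unit_normal x a b)) 0 u v _ HD Hd HM (der3_dot _ _ _ _ _ Dauvu Dnu)).
  assert (HnnD : forall a b, D (a,b) -> dot (unit_normal x a b) (unit_normal x a b) = 1).
  { intros a b Hab. apply unit_nn. auto. }
  assert (HnaD : forall a b, D (a,b) -> dot (unit_normal x a b) (vd_u x a b) = 0).
  { intros a b Hab. unfold unit_normal. rewrite dot_scal, cross_dot_l. ring. }
  assert (HnbD : forall a b, D (a,b) -> dot (unit_normal x a b) (vd_v x a b) = 0).
  { intros a b Hab. unfold unit_normal. rewrite dot_scal, cross_dot_r. ring. }
  assert (nn_u := const_der_u D _ 1 u v _ HD Hd HnnD (der3_dot _ _ _ _ _ Dnu Dnu)).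
  assert (nn_v := const_der_v D _ 1 u v _ HD Hd HnnD (der3_dot _ _ _ _ _ Dnv Dnv)).
  assert (na_u := const_der_u D _ 0 u v _ HD Hd HnaD (der3_dot _ _ _ _ _ Dnu Dau)).
  assert (nb_u := const_der_u D _ 0 u v _ HD Hd HnbD (der3_dot _ _ _ _ _ Dnu Dbu)).
  assert (na_v := const_der_v D _ 0 u v _ HD Hd HnaD (der3_dot _ _ _ _ _ Dnv Dav)).
  assert (nb_v := const_der_v D _ 0 u v _ HD Hd HnbD (der3_dot _ _ _ _ _ Dnv Dbv)).
  pose proof (HF u v Hd) as F0. pose proof (HM u v Hd) as M0.
  pose proof (schwarz3 D x u v HD Hs Hd) as S1.
  pose proof (schwarz3 D (vd_u x) u v HD Hsu Hd) as S2.
  pose proof (der3_dot _ _ _ _ _ Dauuv Dnv) as DL.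
  pose proof (der3_dot _ _ _ _ _ Dav Dav) as DE.
  cbv beta in *.
  rewrite S1 in Fu, nb_u. rewrite S2 in Mu.
  pose proof (HC u v Hd) as HCp.
  pose proof (dot_pos _ (cross_nz_l _ _ HCp)) as Ep.
  pose proof (dot_pos _ (cross_nz_r _ _ HCp)) as Gp.
  unfold F_ in F0. unfold M_ in M0.
  set (a := vd_u x u v) in *. set (b := vd_v x u v) in *. set (n := unit_normal x u v) in *.
  set (Auu := vd_u (vd_u x) u v) in *. set (Auv := vd_v (vd_u x) u v) in *.
  set (Avv := vd_v (vd_v x) u v) in *. set (Auuv := vd_v (vd_u (vd_u x)) u v) in *.
  assert (nnu : dot nu' n = 0) by (rewrite (dot_comm n nu') in nn_u; lra).
  assert (nnv : dot nv' n = 0) by (rewrite (dot_comm n nv') in nn_v; lra).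
  assert (nbu : dot nu' b = 0) by (rewrite (dot_comm n Auv) in nb_u; lra).
  assert (nav : dot nv' a = 0) by (rewrite (dot_comm n Auv) in na_v; lra).
  pose proof (decomp_a a b nu' Auv F0 HCp nbu (perp_C _ _ HCp nnu)) as X1.
  pose proof (decomp_b a b nv' Auu F0 HCp nav (perp_C _ _ HCp nnv)) as X2.
  split.
  - eapply isd_ext; [intro; reflexivity| |exact DE]. rewrite (dot_comm Auv a). lra.
  - assert (DEi := isd_inv _ _ _ DE ltac:(apply Rgt_not_eq; exact Ep)).
    assert (DN := isd_mult _ _ _ _ _ DL DEi).
    eapply isd_ext; [| |exact DN].
    + intro s. unfold nu1, L_, E_, Rdiv. reflexivity.
    + cbv beta. fold a Auu n. unfold nu1, nu2, L_, N_, E_, G_. fold a b n Auu Avv.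
      assert (Y1 : dot Auv nu' = dot nu' a * dot Auv a / dot a a).
      { rewrite <- X1. field. lra. }
      assert (Y2 : dot Auu nv' = dot nv' b * dot Auu b / dot b b).
      { rewrite <- X2. field. lra. }
      replace (dot Auuv n) with (- dot Auv nu') by lra.
      rewrite Y1, Y2.
      rewrite (dot_comm n Auu) in na_u. rewrite (dot_comm n Avv) in nb_v.
      replace (dot nu' a) with (- dot Auu n) by lra.
      replace (dot nv' b) with (- dot Avv n) by lra.
      replace (dot Auu b) with (- dot a Auv) by lra.
      rewrite (dot_comm Auv a). field. split; lra.
Qed.


Lemma cont2d_swap (h : R -> R -> R) a b : continuity_2d_pt h b a -> continuity_2d_pt (fun x y => h y x) a b.
Proof.
  intros H eps. destruct (H eps) as [d Hd]. exists d. intros u v Hu Hv. apply Hd; auto.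
Qed.

Lemma Ck_swap k D h : Ck k D h -> Ck k (fun p => D (snd p, fst p)) (fun a b => h b a).
Proof.
  revert h. induction k as [|k IH]; intros h Hk.
  - destruct Hk as [Hc _]. split; [|exact I]. intros [p1 p2] Hp. cbn [fst snd] in Hp.
    apply (proj1 (continuity_2d_pt_filterlim (fun a b => h b a) p1 p2)). apply cont2d_swap.
    apply (proj2 (continuity_2d_pt_filterlim h p2 p1)). exact (Hc (p2, p1) Hp).
  - destruct Hk as [Hc [He [Hu Hv]]]. split; [|split; [|split]].
    + intros [p1 p2] Hp. cbn [fst snd] in Hp.
      apply (proj1 (continuity_2d_pt_filterlim (fun a b => h b a) p1 p2)). apply cont2d_swap.
      apply (proj2 (continuity_2d_pt_filterlim h p2 p1)). exact (Hc (p2, p1) Hp).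
    + intros [p1 p2] Hp. simpl in *. destruct (He (p2, p1) Hp) as [e1 e2]. simpl in *. split; assumption.
    + exact (IH (pd_v h) Hv).
    + exact (IH (pd_u h) Hu).
Qed.

Lemma smooth_swap D h : smooth_on D h -> smooth_on (fun p => D (snd p, fst p)) (fun a b => h b a).
Proof. intros H k. apply Ck_swap, H. Qed.

Lemma smooth3_swap D x : smooth3 D x -> smooth3 (fun p => D (snd p, fst p)) (fun a b => x b a).
Proof. intros [h1 [h2 h3]]. split; [|split]; [exact (smooth_swap _ _ h1)|exact (smooth_swap _ _ h2)|exact (smooth_swap _ _ h3)]. Qed.

Lemma open_swap (D : R * R -> Prop) : open D -> open (fun p : R * R => D (snd p, fst p)).
Proof.
  intros HD. apply sq_open. intros [p1 p2] Hp. simpl in Hp.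
  destruct (open_loc2d D p2 p1 HD Hp) as [[d Hd] H]. exists d. split; [exact Hd|].
  intros [q1 q2] H1 H2. simpl in *. apply H; assumption.
Qed.

Lemma cross_anti p q : cross q p = vscal (-1) (cross p q).
Proof. unfold cross, vscal, c1, c2, c3; simpl. f_equal; [f_equal|]; ring. Qed.

Lemma vnorm_opp C : vnorm (vscal (-1) C) = vnorm C.
Proof. unfold vnorm. f_equal. rewrite dot_scal, dot_comm, dot_scal. ring. Qed.

Lemma vscal_comm k l C : vscal k (vscal l C) = vscal l (vscal k C).
Proof. unfold vscal, c1, c2, c3; simpl. f_equal; [f_equal|]; ring. Qed.

Lemma normal_swap x a b : unit_normal (fun a b => x b a) a b = vscal (-1) (unit_normal x b a).
Proof.
  unfold unit_normal. change (vd_u (fun a b => x b a) a b) with (vd_v x b a).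
  change (vd_v (fun a b => x b a) a b) with (vd_u x b a).
  rewrite cross_anti, vnorm_opp. apply vscal_comm.
Qed.

Lemma vscal_m1_zero C : vscal (-1) C = vzero -> C = vzero.
Proof.
  destruct C as [[c1' c2'] c3']. unfold vscal, vzero, c1, c2, c3; simpl. intros H.
  injection H as e1 e2 e3. f_equal; [f_equal|]; lra.
Qed.

Lemma isd_opp (f : R -> R) (t l : R) : is_derive f t l -> is_derive (fun s => - f s) t (- l).
Proof. intros H. apply (is_derive_opp f); auto. Qed.

Lemma codazzi_u x D u v :
  open D -> smooth3 D x ->
  (forall a b, D (a,b) -> cross (vd_u x a b) (vd_v x a b) <> vzero) ->
  (forall a b, D (a,b) -> F_ x a b = 0) ->
  (forall a b, D (a,b) -> M_ x a b = 0) ->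
  D (u,v) ->
  is_derive (fun t => G_ x t v) u (2 * dot (vd_v x u v) (vd_u (vd_v x) u v)) /\
  is_derive (fun t => nu2 x t v) u
    (2 * dot (vd_v x u v) (vd_u (vd_v x) u v) / (2 * G_ x u v) * (nu1 x u v - nu2 x u v)).
Proof.
  intros HD Hs HC HF HM Hd.
  set (y := fun a b => x b a). set (Dy := fun p : R * R => D (snd p, fst p)).
  assert (Hy := codazzi y Dy v u (open_swap D HD) (smooth3_swap D x Hs)).
  assert (E1 : forall a b, nu1 y a b = - nu2 x b a).
  { intros a b. unfold nu1, nu2, L_, N_, E_, G_. 
    change (vd_u (vd_u y) a b) with (vd_v (vd_v x) b a).
    change (vd_u y a b) with (vd_v x b a). unfold y. rewrite normal_swap, (dot_comm _ (vscal _ _)), dot_scal, dot_comm.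
    unfold Rdiv. ring. }
  assert (E2 : forall a b, nu2 y a b = - nu1 x b a).
  { intros a b. unfold nu1, nu2, L_, N_, E_, G_. 
    change (vd_v (vd_v y) a b) with (vd_u (vd_u x) b a).
    change (vd_v y a b) with (vd_u x b a). unfold y. rewrite normal_swap, (dot_comm _ (vscal _ _)), dot_scal, dot_comm.
    unfold Rdiv. ring. }
  destruct Hy as [H1 H2].
  - intros a b Hab. change (cross (vd_v x b a) (vd_u x b a) <> vzero). rewrite cross_anti.
    intro Z. apply (HC b a Hab). now apply vscal_m1_zero.
  - intros a b Hab. change (dot (vd_v x b a) (vd_u x b a) = 0). rewrite dot_comm. exact (HF b a Hab).
  - intros a b Hab. change (dot (vd_u (vd_v x) b a) (unit_normal y a b) = 0).
    unfold y. rewrite normal_swap, (schwarz3 D x b a HD Hs Hab), (dot_comm _ (vscal _ _)), dot_scal, dot_comm.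
    unfold M_ in HM. rewrite (HM b a Hab). ring.
  - exact Hd.
  - split; [exact H1|].
    pose proof (isd_opp _ _ _ H2) as H3.
    eapply isd_ext; [| |exact H3].
    + intro s. cbv beta. rewrite E1. ring.
    + rewrite E1, E2. change (E_ y v u) with (G_ x u v).
      change (vd_u y v u) with (vd_v x u v). change (vd_v (vd_u y) v u) with (vd_u (vd_v x) u v). unfold Rdiv. ring.
Qed.


Lemma isd_comp (F g : R -> R) (t dF dg : R) : is_derive F (g t) dF -> is_derive g t dg ->
  is_derive (fun s => F (g s)) t (dF * dg).
Proof.
  intros H1 H2. eapply isd_ext; [| |exact (is_derive_comp F g t dF dg H1 H2)].
  intro; reflexivity. simpl. change (dg * dF = dF * dg). ring.
Qed.

Lemma isd_sqrt (e : R -> R) (t de : R) : is_derive e t de -> 0 < e t ->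
  is_derive (fun s => sqrt (e s)) t (de / (2 * sqrt (e t))).
Proof. intros. apply (is_derive_sqrt e); auto. Qed.

Lemma isd_lnsqrt (e : R -> R) (t de : R) : is_derive e t de -> 0 < e t ->
  is_derive (fun s => ln (sqrt (e s))) t (de / (2 * e t)).
Proof.
  intros H He. pose proof (sqrt_lt_R0 _ He) as Hs.
  eapply isd_ext; [| |exact (isd_comp ln (fun s => sqrt (e s)) t _ _ (is_derive_ln _ Hs) (isd_sqrt e t de H He))].
  intro; reflexivity.
  rewrite <- (sqrt_sqrt (e t)) at 3 by lra. field. lra.
Qed.

Lemma line_lemma (E G n1 n2 nuL f g Phi Psi : R -> R) (t dE dG dn : R) :
  is_derive E t dE -> is_derive G t dG -> is_derive nuL t dn -> 0 < E t -> 0 < G t ->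
  locally t (fun s => n1 s = f (nuL s) /\ n2 s = g (nuL s)) ->
  ex_derive f (nuL t) -> ex_derive g (nuL t) -> f (nuL t) - g (nuL t) > 0 ->
  is_derive Phi (nuL t) (Derive f (nuL t) / (f (nuL t) - g (nuL t))) ->
  is_derive Psi (nuL t) (Derive g (nuL t) / (g (nuL t) - f (nuL t))) ->
  exists lam mu : R,
    is_derive (fun s => ln (sqrt (E s)) + Phi (nuL s)) t lam /\
    is_derive (fun s => ln (sqrt (G s)) + Psi (nuL s)) t mu /\
    is_derive (fun s => sqrt (E s * G s) * (n1 s - n2 s)) t
       (sqrt (E t * G t) * (n1 t - n2 t) * (lam + mu)) /\
    (is_derive n1 t (dE / (2 * E t) * (n2 t - n1 t)) -> lam = 0) /\
    (is_derive n2 t (dG / (2 * G t) * (n1 t - n2 t)) -> mu = 0).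
Proof.
  intros HE HG Hn Ep Gp Hloc Hf Hg Hfg HPhi HPsi.
  destruct (locally_singleton _ _ Hloc) as [e1 e2].
  set (f' := Derive f (nuL t)). set (g' := Derive g (nuL t)).
  assert (D1 : is_derive n1 t (f' * dn)).
  { apply (is_derive_ext_loc (fun s => f (nuL s))).
    - generalize Hloc. apply filter_imp. intros s [h _]. now rewrite h.
    - apply isd_comp; auto. apply Derive_correct; auto. }
  assert (D2 : is_derive n2 t (g' * dn)).
  { apply (is_derive_ext_loc (fun s => g (nuL s))).
    - generalize Hloc. apply filter_imp. intros s [_ h]. now rewrite h.
    - apply isd_comp; auto. apply Derive_correct; auto. }
  exists (dE / (2 * E t) + f' / (f (nuL t) - g (nuL t)) * dn).
  exists (dG / (2 * G t) + g' / (g (nuL t) - f (nuL t)) * dn).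
  split; [|split; [|split; [|split]]].
  - apply isd_plus. apply isd_lnsqrt; auto. eapply isd_ext; [| |apply isd_comp; [exact HPhi|exact Hn]].
    intro; reflexivity. reflexivity.
  - apply isd_plus. apply isd_lnsqrt; auto. eapply isd_ext; [| |apply isd_comp; [exact HPsi|exact Hn]].
    intro; reflexivity. reflexivity.
  - assert (EGp : 0 < E t * G t) by nra.
    pose proof (isd_mult _ _ _ _ _ (isd_sqrt _ _ _ (isd_mult _ _ _ _ _ HE HG) EGp) (isd_minus _ _ _ _ _ D1 D2)) as K.
    eapply isd_ext; [intro; reflexivity| |exact K].
    pose proof (sqrt_lt_R0 _ EGp) as Sp. pose proof (sqrt_sqrt (E t * G t) ltac:(lra)) as SS.
    set (S := sqrt (E t * G t)) in *.
    assert (HS : / (2 * S) = S / (2 * (E t * G t))) by (rewrite <- SS; field; lra).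
    unfold Rdiv at 1. rewrite HS. rewrite e1, e2. field. repeat split; lra.
  - intros H. pose proof (is_derive_unique _ _ _ H) as U1. rewrite (is_derive_unique _ _ _ D1) in U1.
    rewrite e1, e2 in U1. transitivity (dE/(2*E t) + (f' * dn) / (f (nuL t) - g (nuL t))).
    field. lra. rewrite U1. field. split; lra.
  - intros H. pose proof (is_derive_unique _ _ _ H) as U1. rewrite (is_derive_unique _ _ _ D2) in U1.
    rewrite e1, e2 in U1. transitivity (dG/(2*G t) + (g' * dn) / (g (nuL t) - f (nuL t))).
    field. lra. rewrite U1. field. split; lra.
Qed.


Theorem proposition4p6 (x : R -> R -> V3) (D : R * R -> Prop)
    (I : R -> Prop) (f g : R -> R) (nu : R -> R -> R) (Phi Psi : R -> R) :
  regular_surface x D ->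
  principal_parameters x D ->
  no_umbilics x D ->
  strongly_regular x D ->
  weingarten_data x D I f g nu ->
  antiderivative_on I Phi (fun t => Derive f t / (f t - g t)) ->
  antiderivative_on I Psi (fun t => Derive g t / (g t - f t)) ->
  (geometric_principal_parameters x D nu Phi Psi <->
   constant_on D (fun u v => sqrt (E_ x u v * G_ x u v) * (nu1 x u v - nu2 x u v))).
Proof.
  intros Hreg Hpp Hnu Hsr Hw HPhi HPsi.
  destruct Hreg as [Hdom [s1 [s2 [s3 HC]]]].
  pose proof Hdom as [HD Hcon].
  assert (Hs : smooth3 D x) by (split; [|split]; assumption).
  assert (HF : forall a b, D (a,b) -> F_ x a b = 0) by (intros a b h; exact (proj1 (Hpp a b h))).
  assert (HM : forall a b, D (a,b) -> M_ x a b = 0) by (intros a b h; exact (proj2 (Hpp a b h))).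
  destruct Hw as [Hfg Hpts].
  set (K := fun a b => sqrt (E_ x a b * G_ x a b) * (nu1 x a b - nu2 x a b)).
  assert (Hpt : forall u v, D (u, v) -> exists lu mv : R,
    is_derive (fun t => lambda_ x nu Phi t v) u lu /\ is_derive (fun t => mu_ x nu Psi t v) u 0 /\
    is_derive (fun t => K t v) u (K u v * lu) /\
    is_derive (fun t => lambda_ x nu Phi u t) v 0 /\ is_derive (fun t => mu_ x nu Psi u t) v mv /\
    is_derive (fun t => K u t) v (K u v * mv)).
  { intros u v Hd.
    destruct (Hpts u v Hd) as [HI [Hdn [_ [e1 e2]]]].
    destruct (Hfg (nu u v) HI) as [Hf [Hg [Hfg0 _]]].
    pose proof (HC u v Hd) as HCp.
    pose proof (dot_pos _ (cross_nz_l _ _ HCp)) as Ep.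
    pose proof (dot_pos _ (cross_nz_r _ _ HCp)) as Gp.
    destruct (codazzi x D u v HD Hs HC HF HM Hd) as [CE CN].
    pose proof (der3_dot _ _ _ _ _ (der3_v D (vd_v x) u v (smooth3_v _ _ Hs) Hd) (der3_v D (vd_v x) u v (smooth3_v _ _ Hs) Hd)) as DGv.
    destruct (line_lemma (fun s => E_ x u s) (fun s => G_ x u s) (fun s => nu1 x u s) (fun s => nu2 x u s)
       (fun s => nu u s) f g Phi Psi v _ _ _ CE DGv (Derive_correct _ _ (diffpt_v _ _ _ Hdn)) Ep Gp)
      as [lam [mu [Lv [Mv [Kv [C1 _]]]]]]; auto.
    { generalize (loc_v D u v HD Hd). apply filter_imp. intros s Hs'.
      destruct (Hpts u s Hs') as [_ [_ [_ [h1 h2]]]]. split; assumption. }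
    destruct (codazzi_u x D u v HD Hs HC HF HM Hd) as [CG CN2].
    pose proof (der3_dot _ _ _ _ _ (der3_u D (vd_u x) u v (smooth3_u _ _ Hs) Hd) (der3_u D (vd_u x) u v (smooth3_u _ _ Hs) Hd)) as DEu.
    destruct (line_lemma (fun s => E_ x s v) (fun s => G_ x s v) (fun s => nu1 x s v) (fun s => nu2 x s v)
       (fun s => nu s v) f g Phi Psi u _ _ _ DEu CG (Derive_correct _ _ (diffpt_u _ _ _ Hdn)) Ep Gp)
      as [lam' [mu' [Lu [Mu [Ku [_ C2]]]]]]; auto.
    { generalize (loc_u D u v HD Hd). apply filter_imp. intros s Hs'.
      destruct (Hpts s v Hs') as [_ [_ [_ [h1 h2]]]]. split; assumption. }
    specialize (C1 CN). specialize (C2 CN2). subst lam mu'.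
    exists lam', mu. split; [exact Lu|]. split; [exact Mu|]. split.
    { eapply isd_ext; [intro; reflexivity| |exact Ku]. unfold K. ring. }
    split; [exact Lv|]. split; [exact Mv|].
    eapply isd_ext; [intro; reflexivity| |exact Kv]. unfold K. ring. }
  assert (Kpos : forall u v, D (u, v) -> 0 < K u v).
  { intros u v Hd. unfold K. pose proof (HC u v Hd) as HCp.
    pose proof (dot_pos _ (cross_nz_l _ _ HCp)) as Ep.
    pose proof (dot_pos _ (cross_nz_r _ _ HCp)) as Gp.
    destruct (Hsr u v Hd) as [_ Hp]. apply Rmult_lt_0_compat; [|lra].
    apply sqrt_lt_R0. unfold E_, G_. nra. }
  split.
  - intros [[cl Hl] [cm Hm]]. apply (const_of_zero D K Hdom). intros u v Hd.
    destruct (Hpt u v Hd) as [lu [mv [L1 [M1 [K1 [L2 [M2 K2]]]]]]].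
    pose proof (const_der_u D (lambda_ x nu Phi) cl u v lu HD Hd Hl L1) as Z1.
    pose proof (const_der_v D (mu_ x nu Psi) cm u v mv HD Hd Hm M2) as Z2.
    subst lu mv. split.
    + eapply isd_ext; [intro; reflexivity| |exact K1]. ring.
    + eapply isd_ext; [intro; reflexivity| |exact K2]. ring.
  - intros [c Hc]. split.
    + apply (const_of_zero D _ Hdom). intros u v Hd.
      destruct (Hpt u v Hd) as [lu [mv [L1 [M1 [K1 [L2 [M2 K2]]]]]]].
      pose proof (const_der_u D K c u v _ HD Hd Hc K1) as Z1.
      pose proof (Kpos u v Hd) as Kp.
      assert (lu = 0) by (apply Rmult_integral in Z1; destruct Z1; [lra|assumption]).
      subst lu. split; assumption.
    + apply (const_of_zero D _ Hdom). intros u v Hd.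
      destruct (Hpt u v Hd) as [lu [mv [L1 [M1 [K1 [L2 [M2 K2]]]]]]].
      pose proof (const_der_v D K c u v _ HD Hd Hc K2) as Z1.
      pose proof (Kpos u v Hd) as Kp.
      assert (mv = 0) by (apply Rmult_integral in Z1; destruct Z1; [lra|assumption]).
      subst mv. split; assumption.
Qed.
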